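(* Let $\mathcal{P}_{XY}$ be a probability distribution over $\mathbb{R}^d\times\{\pm1\}$ with marginal distribution $\mathcal{P}_X$ on $\mathbb{R}^d$, let $\mathcal{B}:\mathbb{R}^d\to\mathscr{P}(\mathbb{R}^d)$ be a perturbation set map, and let $\mathcal{F}$ be a hypothesis space of classifiers $f:\mathbb{R}^d\to\{-1,1\}$. Let $S=\{(x_i,y_i)\}_{i=1}^n$ be a set of $n$ i.i.d. samples drawn from $\mathcal{P}_{XY}$. For any function $f\in\mathcal{F}$, with probability at least $1-\delta$ over the random draw of $S$, \[ R^{0/1}_{\mathcal{B}\text{-robust}}(f)\le \mathbb{E}_{x\sim\mathcal{P}_X}\sup_{x'\in\mathcal{B}(x)}\mathbb{I}\big(f(x')\neq f(x)\big)+\hat{R}^{0/1}(f)+Rad_S(\mathcal{F})+3\sqrt{\frac{\log\frac{2}{\delta}}{2n}}. \]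
   Context: The zero-one loss is $l^{0/1}(y',y)=\mathbb{I}[y'\neq y]$. The expected robust classification risk with zero-one loss is $R^{0/1}_{\mathcal{B}\text{-robust}}(f)=\mathbb{E}_{(x,y)\sim\mathcal{P}_{XY}}\sup_{x'\in\mathcal{B}(x)}\mathbb{I}[f(x')\neq y]$. The empirical classification risk with zero-one loss is $\hat{R}^{0/1}(f)=\frac{1}{n}\sum_{i=1}^n\mathbb{I}[f(x_i)\neq y_i]$. The empirical Rademacher complexity is $Rad_S(\mathcal{F})=\frac{1}{n}\mathbb{E}_{\epsilon}\big[\sup_{f\in\mathcal{F}}\sum_{i=1}^n\epsilon_i f(x_i)\big]$, where $\epsilon_1,\dots,\epsilon_n$ are i.i.d. uniform on $\{1,-1\}$. *)

(* Defs.v *)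
From mathcomp Require Import all_boot all_order all_algebra all_classical all_reals all_analysis.
Import numFieldNormedType.Exports.
Set Implicit Arguments. Unset Strict Implicit. Unset Printing Implicit Defensive.
Import Order.TTheory GRing.Theory Num.Theory.
Local Open Scope classical_set_scope.
Local Open Scope ring_scope.

(* R^d = 'rV[R]_d equipped with its Borel sigma-algebra (generated by the open sets). *)
Definition Rd (R : realType) (d : nat) := g_sigma_algebraType (@open 'rV[R]_d).

(* Labels / classifier outputs in {-1,+1} are encoded by bool: true = +1, false = -1. *)
Definition pm {R : realType} (b : bool) : R := if b then 1 else -1.

Section defs.
Variables (R : realType) (d : nat).

(* sup_{x' in B(x)} I[f(x') <> y]   (real sup; sup of the empty set is 0) *)
Definition robust_loss (B : Rd R d -> set (Rd R d)) (f : Rd R d -> bool)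
  (z : (Rd R d * bool)%type) : R :=
  sup [set ((f x' != z.2)%:R : R) | x' in B z.1].

Definition adv_loss (B : Rd R d -> set (Rd R d)) (f : Rd R d -> bool)
  (x : Rd R d) : R :=
  sup [set ((f x' != f x)%:R : R) | x' in B x].

Definition robust_risk (P : probability (Rd R d * bool)%type R)
  (B : Rd R d -> set (Rd R d)) (f : Rd R d -> bool) : \bar R :=
  (\int[P]_z (robust_loss B f z)%:E)%E.

(* E_{x ~ P_X} sup_{x' in B(x)} I[f(x') <> f(x)], P_X the marginal of P on R^d *)
Definition adv_term (P : probability (Rd R d * bool)%type R)
  (B : Rd R d -> set (Rd R d)) (f : Rd R d -> bool) : \bar R :=
  (\int[P]_z (adv_loss B f z.1)%:E)%E.

Definition emp_risk (n : nat) (S : 'I_n -> (Rd R d * bool)%type) (f : Rd R d -> bool) : R :=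
  n%:R^-1 * \sum_(i < n) ((f (S i).1 != (S i).2)%:R : R).

(* empirical Rademacher complexity: (1/n) E_eps sup_{f in F} sum_i eps_i f(x_i),
   eps uniform on {-1,1}^n, so E_eps is the average over the 2^n sign vectors. *)
Definition rademacher (n : nat) (S : 'I_n -> (Rd R d * bool)%type)
  (F : set (Rd R d -> bool)) : R :=
  n%:R^-1 * ((2 ^ n)%:R^-1 *
    \sum_(eps : {ffun 'I_n -> bool})
      sup [set (\sum_(i < n) pm (eps i) * pm (f (S i).1)) | f in F]).

End defs.

Definition iid_sample {R : realType} (dO dT : measure_display)
  (Omega : measurableType dO) (T : measurableType dT)
  (Q : probability Omega R) (P : probability T R) (n : nat)
  (Z : 'I_n -> Omega -> T) : Prop :=
  [/\ (forall i, measurable_fun setT (Z i)),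
      (forall i (A : set T), measurable A -> Q (Z i @^-1` A) = P A) &
      (forall A : 'I_n -> set T, (forall i, measurable (A i)) ->
         Q (\bigcap_(i in [set: 'I_n]) (Z i @^-1` A i))
         = (\prod_(i < n) Q (Z i @^-1` A i))%E)].

(* Main.v *)
Require Import Defs.
From mathcomp Require Import all_boot all_order all_algebra all_classical all_reals all_analysis.
From mathcomp Require Import ring lra.
From mathcomp Require Import measurable_realfun.
Import numFieldNormedType.Exports.
Import Order.TTheory GRing.Theory Num.Theory.
Local Open Scope classical_set_scope.
Local Open Scope ring_scope.
Set Warnings "-all".

Lemma tail_bound (R : realType) (n : nat) (p t : R) :
  0 <= p <= 1 -> 0 < t ->
  \sum_(g : {ffun 'I_n -> bool} | \sum_(i < n) ((g i)%:R : R) < n%:R * (p - t))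
     \prod_(i < n) (if g i then p else 1 - p)
  <= expR (- (n%:R * t ^+ 2 / 4)).
Proof.
move=> /andP[p0 p1] t0.
set lam := t / 2.
have lam0 : 0 < lam by rewrite /lam divr_gt0.
set s := expR (- lam).
have s0 : 0 <= s by exact: expR_ge0.
have s1 : s * (1 + lam) <= 1.
  have := expR_ge1Dx lam; have := expRxMexpNx_1 lam; rewrite -/s; nra.
have sle : s <= 1 - lam + lam ^+ 2 by nra.
pose c (g : {ffun 'I_n -> bool}) := \sum_(i < n) ((g i)%:R : R).
pose w (g : {ffun 'I_n -> bool}) := \prod_(i < n) (if g i then p else 1 - p).
have w0 g : 0 <= w g by apply: prodr_ge0 => i _; case: (g i); lra.
apply: (@le_trans _ _ (\sum_(g : {ffun 'I_n -> bool}) (expR (lam * (n%:R * (p - t))) *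
    \prod_(i < n) (if g i then p * s else 1 - p)))).
  apply: (@le_trans _ _ (\sum_(g : {ffun 'I_n -> bool} | c g < n%:R * (p - t))
    (expR (lam * (n%:R * (p - t))) * \prod_(i < n) (if g i then p * s else 1 - p)))); last first.
    rewrite [leRHS](bigID (fun g => c g < n%:R * (p - t))) /= lerDl.
    apply: sumr_ge0 => g _; apply: mulr_ge0; first exact: expR_ge0.
    by apply: prodr_ge0 => i _; case: (g i); nra.
  apply: ler_sum => g cg.
  have -> : \prod_(i < n) (if g i then p * s else 1 - p) = w g * expR (- (lam * c g)).
    rewrite /w /c mulr_sumr -sumrN expR_sum -big_split /=.
    by apply: eq_bigr => i _; case: (g i) => /=; rewrite ?mulr1 ?mulr0 ?oppr0 ?expR0 ?mulr1.
  rewrite -/(w g) mulrCA -expRD -{1}[w g]mulr1 ler_wpM2l //.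
  apply: le_trans (expR_ge1Dx _); rewrite lerDl /c; nra.

rewrite -mulr_sumr -(@bigA_distr_bigA _ _ _ _ _ _ _ (fun (i : 'I_n) (b : bool) => if b then p * s else 1 - p)) /=.
under eq_bigr do rewrite big_bool /=.
have s2 : 1 - lam <= s by rewrite /s; have := expR_ge1Dx (- lam); lra.
apply: (@le_trans _ _ (expR (lam * (n%:R * (p - t))) * \prod_(i < n) expR (p * s - p))).
  apply: ler_wpM2l; first exact: expR_ge0.
  apply: ler_prod => i _; apply/andP; split; first nra.
  by have := expR_ge1Dx (p * s - p); lra.
rewrite -expR_sum sumr_const card_ord -mulr_natr -expRD ler_expR.
have key : p * (s - 1 + lam) <= lam ^+ 2 by nra.
have key2 : lam * (p - t) + (p * s - p) <= - (t ^+ 2 / 4).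
  rewrite /lam; rewrite /lam in key; nra.
have n0 : 0 <= (n%:R : R) by [].
nra.
Qed.

Lemma sup01 (R : realType) (S : set R) :
  (forall x, S x -> 0 <= x <= 1) -> 0 <= sup S <= 1.
Proof.
move=> H.
have [->|/set0P[x Sx]] := eqVneq S set0; first by rewrite sup0 lexx ler01.
apply/andP; split.
  have := H x Sx => /andP[x0 _]; apply: le_trans x0 _.
  apply: ub_le_sup => //; exists 1 => y /H /andP[].
  by [].
by apply: ge_sup; [exists x | move=> y /H /andP[]].
Qed.

Lemma pm_sum_eps (R : realType) n (i : 'I_n) :
  \sum_(eps : {ffun 'I_n -> bool}) (pm (eps i) : R) = 0.
Proof.
pose fl (eps : {ffun 'I_n -> bool}) : {ffun 'I_n -> bool} :=
  [ffun j => if j == i then ~~ eps j else eps j].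
have flK : involutive fl.
  by move=> e; apply/ffunP => j; rewrite !ffunE; case: eqP => // _; rewrite negbK.
have E : \sum_(eps : {ffun 'I_n -> bool}) (pm (eps i) : R) =
    \sum_(eps : {ffun 'I_n -> bool}) (pm (fl eps i) : R).
  exact: (reindex_inj (inv_inj flK)).
have : \sum_(eps : {ffun 'I_n -> bool}) (pm (eps i) : R) =
   - \sum_(eps : {ffun 'I_n -> bool}) (pm (eps i) : R).
  rewrite {1}E -sumrN; apply: eq_bigr => e _.
  by rewrite ffunE eqxx; case: (e i) => /=; rewrite /pm ?opprK.
lra.
Qed.

Lemma rad_ge0 (R : realType) d n (S : 'I_n -> (Rd R d * bool)%type)
  (F : set (Rd R d -> bool)) f : F f -> 0 <= rademacher S F.
Proof.
move=> Ff; rewrite /rademacher; apply: mulr_ge0; first by rewrite invr_ge0.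
apply: mulr_ge0; first by rewrite invr_ge0.
apply: (@le_trans _ _ (\sum_(eps : {ffun 'I_n -> bool})
     \sum_(i < n) pm (eps i) * pm (f (S i).1))).
  rewrite exchange_big /= big1 // => i _.
  by rewrite -mulr_suml pm_sum_eps mul0r.
apply: ler_sum => eps _.
apply: ub_le_sup; last by exists f.
exists n%:R => y [g _ <-].
apply: (@le_trans _ _ (\sum_(i < n) (1 : R))); last by rewrite sumr_const card_ord.
by apply: ler_sum => i _; rewrite /pm; case: (eps i); case: (g _); lra.
Qed.

Lemma mpreT d1 d2 (T1 : measurableType d1) (T2 : measurableType d2)
  (g : T1 -> T2) (A : set T2) :
  measurable_fun setT g -> measurable A -> measurable (g @^-1` A).
Proof. by move=> mg mA; rewrite -[_ @^-1` _]setTI; apply: mg. Qed.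


Lemma sup_ind01 (R : realType) (T : Type) (A : set T) (b : T -> bool) :
  0 <= sup [set ((b x)%:R : R) | x in A] <= 1.
Proof. by apply: sup01 => _ [x _ <-]; case: (b x); rewrite /= ?lexx ?ler01. Qed.

Lemma pw (R : realType) d (B : Rd R d -> set (Rd R d)) (f : Rd R d -> bool) z :
  robust_loss B f z <= adv_loss B f z.1 + ((f z.1 != z.2)%:R : R).
Proof.
case: z => x y; rewrite /robust_loss /adv_loss /=.
have [e|ne] := eqVneq (f x) y.
  by subst y; rewrite /= addr0.

have /andP[_ h1] := @sup_ind01 R _ (B x) (fun x' => f x' != y).
have /andP[h2 _] := @sup_ind01 R _ (B x) (fun x' => f x' != f x).
apply: le_trans h1 _; by rewrite lerDr.
Qed.

Theorem theorem1 (R : realType) (d n : nat) (dO : measure_display)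
  (Omega : measurableType dO) (Q : probability Omega R)
  (P : probability (Rd R d * bool)%type R)
  (B : Rd R d -> set (Rd R d)) (F : set (Rd R d -> bool))
  (Z : 'I_n -> Omega -> (Rd R d * bool)%type) (delta : R) :
  (0 < n)%N -> 0 < delta < 1 ->
  iid_sample Q P Z ->
  forall f : Rd R d -> bool, F f ->
  measurable_fun setT f ->
  measurable_fun setT (robust_loss B f) ->
  measurable_fun setT (adv_loss B f) ->
  exists2 A : set Omega, measurable A /\ ((1 - delta)%:E <= Q A)%E &
    forall w, A w ->
      (robust_risk P B f <=
        adv_term P B f
        + (emp_risk (fun i => Z i w) f + rademacher (fun i => Z i w) F
           + 3 * Num.sqrt (ln (2 / delta) / (2 * n%:R)))%:E)%E.
Proof.
move=> n0 /andP[d0 d1] [Zm Zlaw Zind] f Ff mf mrl mal.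
pose err := [set z : (Rd R d * bool)%type | f z.1 != z.2].
have errE z : (z \in err) = (f z.1 != z.2) by apply/idP/idP => [/set_mem|/mem_set].
have merr : measurable err.
  have -> : err = ((f \o fst) @^-1` [set true] `&` snd @^-1` [set false]) `|`
                  ((f \o fst) @^-1` [set false] `&` snd @^-1` [set true]).
    apply/seteqP; split => -[x y] /=; rewrite /err /=.
      by case: (f x); case: y => //= _; [left|right].
    by case: (f x); case: y => //= -[] [].
  have mff : measurable_fun setT (f \o (@fst (Rd R d) bool)).
    by apply: measurableT_comp => //; exact: measurable_fst.
  apply: measurableU; apply: measurableI; apply: mpreT => //;
    exact: measurable_snd.
have [p Pe] : exists p : R, P err = p%:E.
  exists (fine (P err)); rewrite fineK // ge0_fin_numE ?measure_ge0 //.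
  by apply: (le_lt_trans (probability_le1 _ merr)); rewrite ltry.
have p0 : 0 <= p by rewrite -lee_fin -Pe measure_ge0.
have p1 : p <= 1 by rewrite -lee_fin -Pe probability_le1.
have nR : 0 < (n%:R : R) by rewrite ltr0n.
have Hint : (robust_risk P B f <= adv_term P B f + p%:E)%E.
  have -> : p%:E = (\int[P]_z (\1_err z : R)%:E)%E by rewrite integral_indic // setIT.
  have mr : measurable_fun setT (EFin \o robust_loss B f).
    exact/measurable_EFinP.
  have ma : measurable_fun setT (EFin \o (fun z : (Rd R d * bool)%type => adv_loss B f z.1)).
    apply/measurable_EFinP; apply: measurableT_comp => //; exact: measurable_fst.
  have mi : measurable_fun setT (EFin \o (\1_err : _ -> R)).
    by apply/measurable_EFinP; apply: measurable_indic.
  have ha : forall x : (Rd R d * bool)%type, [set: (Rd R d * bool)%type] x ->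
      (0 <= (adv_loss B f x.1)%:E)%E.
    by move=> z _; rewrite lee_fin; have /andP[] := @sup_ind01 R _ (B z.1) (fun x' => f x' != f z.1).
  have hi : forall x : (Rd R d * bool)%type, [set: (Rd R d * bool)%type] x ->
      (0 <= (\1_err x : R)%:E)%E.
    by move=> z _; rewrite lee_fin indicE.
  have hr : forall x : (Rd R d * bool)%type, [set: (Rd R d * bool)%type] x ->
      (0 <= (robust_loss B f x)%:E)%E.
    by move=> z _; rewrite lee_fin; have /andP[] := @sup_ind01 R _ (B z.1) (fun x' => f x' != z.2).
  rewrite /robust_risk /adv_term -ge0_integralD //.
  apply: ge0_le_integral => //.
  - exact: emeasurable_funD.
  - by move=> z _; rewrite lee_fin indicE errE; exact: pw.
set L := ln (2 / delta).
have L0 : 0 < L by rewrite /L ln_gt0 // ltr_pdivlMr // mul1r; apply: lt_trans d1 _; rewrite ltr1n.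
set t := 3 * Num.sqrt (L / (2 * n%:R)).
have t0 : 0 < t by rewrite /t mulr_gt0 // sqrtr_gt0 divr_gt0 // mulr_gt0.
have t2 : n%:R * t ^+ 2 / 4 = 9 / 8 * L.
  rewrite /t exprMn sqr_sqrtr; last by rewrite divr_ge0 // ?mulr_ge0 // ltW.
  by field; rewrite gt_eqF.
have expb : expR (- (n%:R * t ^+ 2 / 4)) <= delta.
  rewrite t2; apply: (@le_trans _ _ (expR (- L))).
    by rewrite ler_expR; lra.
  rewrite expRN /L lnK; last by rewrite posrE divr_gt0.
  by rewrite invf_div; lra.
pose gw (w : Omega) : {ffun 'I_n -> bool} := [ffun i => f (Z i w).1 != (Z i w).2].
pose Aset (g : {ffun 'I_n -> bool}) (i : 'I_n) := if g i then err else ~` err.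
pose C g := \bigcap_(i in [set: 'I_n]) (Z i @^-1` Aset g i).
pose badg (g : {ffun 'I_n -> bool}) := \sum_(i < n) ((g i)%:R : R) < n%:R * (p - t).
pose Ab g := if badg g then C g else set0.
pose bad := \bigcup_(g in [set: {ffun 'I_n -> bool}]) Ab g.
have mAset g i : measurable (Aset g i).
  by rewrite /Aset; case: (g i) => //; exact: measurableC.
have mC g : measurable (C g).
  apply: fin_bigcap_measurable; first exact: finite_finset.
  by move=> i _; apply: mpreT.
have mAb g : measurable (Ab g) by rewrite /Ab; case: ifP.
have mbad : measurable bad.
  by apply: fin_bigcup_measurable; first exact: finite_finset.
have QAb g : Q (Ab g) = (if badg g then \prod_(i < n) (if g i then p else 1 - p) else 0)%:E.
  rewrite /Ab; case: ifP => _; last by rewrite measure0.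
  rewrite /C Zind // -prodEFin; apply: eq_bigr => i _.
  rewrite Zlaw // /Aset; case: (g i) => //.
  by rewrite probability_setC // Pe.
have Qbad : (Q bad <= delta%:E)%E.
  apply: (le_trans (@content_sub_fsum _ _ _ Q _ [set: {ffun 'I_n -> bool}] bad Ab
     finite_finset (fun g _ => mAb g) mbad _)); first by [].
  rewrite (fsbigE (enum {ffun 'I_n -> bool})) //=; last first.
    by move=> g _; rewrite mem_enum.
    exact: enum_uniq.
  under eq_bigl do rewrite in_setT.
  rewrite big_enum /=.
  under eq_bigr do rewrite QAb.
  rewrite sumEFin lee_fin -big_mkcond /=.
  have pp : 0 <= p <= 1 by rewrite p0 p1.
  apply: le_trans expb; have := @tail_bound R n p t pp t0; rewrite /badg; exact.
exists (~` bad).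
  split; first exact: measurableC.
  rewrite probability_setC //.
  have [q Qe] : exists q : R, Q bad = q%:E.
    exists (fine (Q bad)); rewrite fineK // ge0_fin_numE ?measure_ge0 //.
    by apply: (le_lt_trans (probability_le1 _ mbad)); rewrite ltry.
  by rewrite Qe -EFinB lee_fin; rewrite Qe lee_fin in Qbad; lra.
move=> w nbad.
have nb : ~~ badg (gw w).
  apply/negP => bg; apply: nbad; exists (gw w) => //.
  rewrite /Ab bg /C => i _ /=; rewrite /Aset ffunE.
  by case: ifP => h /=; rewrite /err /= h.
have ce : \sum_(i < n) ((gw w i)%:R : R) = \sum_(i < n) ((f (Z i w).1 != (Z i w).2)%:R : R).
  by apply: eq_bigr => i _; rewrite ffunE.
have pe : p <= emp_risk (fun i => Z i w) f + t.
  rewrite /badg -leNgt ce in nb.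
  rewrite /emp_risk.
  suff : p - t <= n%:R^-1 * \sum_(i < n) ((f (Z i w).1 != (Z i w).2)%:R : R) by lra.
  apply: (@le_trans _ _ (n%:R^-1 * (n%:R * (p - t)))).
    by rewrite mulKf // gt_eqF.
  by rewrite ler_wpM2l // invr_ge0 ler0n.
have rad0 := @rad_ge0 R d n (fun i => Z i w) F f Ff.
apply: (le_trans Hint); apply: leeD2l; rewrite lee_fin; lra.
Qed.
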